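(* For all graphs $G$ and $H$: (i) $\max\{\gamma^{SLD}(G),\gamma^{SLD}(H)\}\le\gamma^{SLD}(G\,\square\, H)\le\min\{|V(H)|\,\gamma^{SLD}(G),\ |V(G)|\,\gamma^{SLD}(H)\}$; (ii) $\max\{\gamma^{DLD}(G),\gamma^{DLD}(H)\}\le\gamma^{DLD}(G\,\square\, H)\le\min\{|V(H)|\,\gamma^{DLD}(G),\ |V(G)|\,\gamma^{DLD}(H)\}$.
   Context: All graphs are finite, simple and undirected (not necessarily connected). For a vertex $u$, $N(u)$ is its set of neighbours and $N[u]=N(u)\cup\{u\}$. A code is a non-empty subset $C$ of the vertex set $V$; $I(C;u)=N[u]\cap C$. A code $C$ is self-locating-dominating if for every $u\in V\setminus C$ we have $I(C;u)\neq\emptyset$ and $\bigcap_{c\in I(C;u)}N[c]=\{u\}$. A code $C$ is solid-locating-dominating if $I(C;u)\ne\emptyset$ for every $u\in V\setminus C$ and $I(C;u)\not\subseteq I(C;v)$ for all distinct $u,v\in V\setminus C$. $\gamma^{SLD}$ and $\gamma^{DLD}$ denote the minimum sizes of such codes. The Cartesian product $G\square H$ has vertex set $V(G)\times V(H)$, with $(u,v)$ adjacent to $(u',v')$ iff either $u=u'$ and $vv'\in E(H)$, or $uu'\in E(G)$ and $v=v'$. *)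

(* Defs.v *)
From mathcomp Require Import all_boot all_order.
Set Implicit Arguments. Unset Strict Implicit. Unset Printing Implicit Defensive.

(* A finite simple graph: vertex type T : finType with an adjacency relation
   e that is symmetric and irreflexive (hypotheses given in the theorem). *)

Definition cnbhd (T : finType) (e : rel T) (u : T) : {set T} :=
  [set v | (v == u) || e u v].

Definition Icode (T : finType) (e : rel T) (C : {set T}) (u : T) : {set T} :=
  cnbhd e u :&: C.

Definition is_SLD (T : finType) (e : rel T) (C : {set T}) : bool :=
  (C != set0) &&
  [forall u, (u \notin C) ==>
     ((Icode e C u != set0) &&
      ((\bigcap_(c in Icode e C u) cnbhd e c) == [set u]))].

Definition is_DLD (T : finType) (e : rel T) (C : {set T}) : bool :=
  (C != set0) &&
  [forall u, (u \notin C) ==> (Icode e C u != set0)] &&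
  [forall u, forall v, ((u \notin C) && (v \notin C) && (u != v)) ==>
     ~~ (Icode e C u \subset Icode e C v)].

(* minimum size of a code satisfying P (V itself is always an SLD/DLD code
   when V is nonempty, so the default #|T| is never the binding value then) *)
Definition min_code (T : finType) (P : {set T} -> bool) : nat :=
  \big[minn/#|T|]_(C : {set T} | P C) #|C|.

Definition gammaSLD (T : finType) (e : rel T) : nat := min_code (is_SLD e).
Definition gammaDLD (T : finType) (e : rel T) : nat := min_code (is_DLD e).

Definition cart_rel (T U : finType) (eG : rel T) (eH : rel U) : rel (T * U) :=
  fun x y => ((x.1 == y.1) && eH x.2 y.2) || (eG x.1 y.1 && (x.2 == y.2)).

(* Main.v *)
Require Import Defs.
From mathcomp Require Import all_boot all_order.
Set Implicit Arguments. Unset Strict Implicit. Unset Printing Implicit Defensive.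

Lemma in_cnbhd (T : finType) (e : rel T) u x : (x \in cnbhd e u) = (x == u) || e u x.
Proof. by rewrite inE. Qed.

Lemma cnbhd_sym (T : finType) (e : rel T) : symmetric e ->
  forall u x, (x \in cnbhd e u) = (u \in cnbhd e x).
Proof. by move=> s u x; rewrite !in_cnbhd eq_sym s. Qed.

Lemma neq_mem (X : finType) (A : {set X}) a b : a \in A -> b \notin A -> (a == b) = false.
Proof. by move=> aA bA; apply/eqP=> Eab; move: bA; rewrite -Eab aA. Qed.

Definition SLDP (T : finType) (e : rel T) (C : {set T}) :=
  C != set0 /\ forall u, u \notin C ->
   (exists c, (c \in C) && (c \in cnbhd e u)) /\
   (forall x, (forall c, c \in C -> c \in cnbhd e u -> x \in cnbhd e c) -> x = u).

Definition DLDP (T : finType) (e : rel T) (C : {set T}) :=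
  C != set0 /\ (forall u, u \notin C -> exists c, (c \in C) && (c \in cnbhd e u)) /\
  (forall u w, u \notin C -> w \notin C -> u != w ->
     exists c, [&& c \in C, c \in cnbhd e u & c \notin cnbhd e w]).

Lemma SLDP_iff (T : finType) (e : rel T) (C : {set T}) : symmetric e ->
  is_SLD e C <-> SLDP e C.
Proof.
move=> s; split.
- case/andP=> C0 /forallP H; split=> // u uC.
  have /andP[/set0Pn[c cI] /eqP E] := implyP (H u) uC.
  split.
    by exists c; move: cI; rewrite /Icode in_setI andbC.
  move=> x Hx; apply/set1P; rewrite -E; apply/bigcapP => c'.
  rewrite /Icode in_setI => /andP[a b]; exact: Hx.
- case=> C0 H; apply/andP; split=> //; apply/forallP=> u; apply/implyP=> uC.
  have [[c /andP[cC cu]] Hx] := H u uC.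
  apply/andP; split.
    by apply/set0Pn; exists c; rewrite /Icode in_setI cu cC.
  apply/eqP/setP=> x; rewrite inE; apply/bigcapP/eqP.
    move=> Hc; apply: Hx => c' c'C c'u; apply: Hc; by rewrite /Icode in_setI c'u c'C.
  move=> -> c'; rewrite /Icode in_setI => /andP[a _]; by rewrite -(cnbhd_sym s).
Qed.

Lemma DLDP_iff (T : finType) (e : rel T) (C : {set T}) :
  is_DLD e C <-> DLDP e C.
Proof.
split.
- case/andP=> /andP[C0 /forallP H1] /forallP H2; split=> //; split.
    move=> u uC; have /set0Pn[c] := implyP (H1 u) uC.
    by rewrite /Icode in_setI andbC => ?; exists c.
  move=> u w uC wC uw; have := implyP (forallP (H2 u) w); rewrite uC wC uw => /(_ isT).
  case/subsetPn=> c; rewrite !in_setI => /andP[a b]; rewrite b andbT => d.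
  by exists c; rewrite a b d.
- case=> C0 [H1 H2]; apply/andP; split; first (apply/andP; split=> //).
  + apply/forallP=> u; apply/implyP=> uC; have [c /andP[a b]] := H1 u uC.
    by apply/set0Pn; exists c; rewrite /Icode in_setI a b.
  + apply/forallP=> u; apply/forallP=> w; apply/implyP=> /andP[/andP[uC wC] uw].
    have [c /and3P[a b d]] := H2 u w uC wC uw.
    by apply/subsetPn; exists c; rewrite !in_setI ?a ?b // (negbTE d).
Qed.

Lemma min_code_le (T : finType) (P : {set T} -> bool) C : P C -> min_code P <= #|C|.
Proof.
move=> PC; rewrite /min_code -big_filter.
have : C \in [seq i <- index_enum {set T} | P i] by rewrite mem_filter PC mem_index_enum.
elim: [seq i <- _ | _] => //= a s IH; rewrite big_cons inE => /orP[/eqP<-|/IH h].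
  exact: geq_minl.
exact: leq_trans (geq_minr _ _) h.
Qed.

Lemma min_code_ex (T : finType) (P : {set T} -> bool) :
  P setT -> exists2 C, P C & min_code P = #|C|.
Proof.
move=> PT; case: (arg_minnP (fun C : {set T} => #|C|) PT) => C PC Hmin.
exists C => //; apply/eqP; rewrite eqn_leq min_code_le //=.
rewrite /min_code; apply: (big_ind (fun n => #|C| <= n)) => //.
- exact: max_card.
- by move=> x y ? ?; rewrite leq_min; apply/andP.
Qed.

Lemma SLD_setT (T : finType) (e : rel T) : #|T| > 0 -> is_SLD e setT.
Proof.
move=> /card_gt0P[x _]; apply/andP; split; first by apply/set0Pn; exists x; rewrite in_setT.
by apply/forallP=> u; rewrite in_setT.
Qed.

Lemma DLD_setT (T : finType) (e : rel T) : #|T| > 0 -> is_DLD e setT.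
Proof.
move=> /card_gt0P[x _]; apply/andP; split; first (apply/andP; split).
- by apply/set0Pn; exists x; rewrite in_setT.
- by apply/forallP=> u; rewrite in_setT.
- by apply/forallP=> u; apply/forallP=> v; rewrite in_setT.
Qed.

Section Prod.
Variables (T U : finType) (eG : rel T) (eH : rel U).
Hypotheses (irrG : irreflexive eG) (irrH : irreflexive eH).
Local Notation E := (cart_rel eG eH).

Lemma symE : symmetric eG -> symmetric eH -> symmetric E.
Proof.
move=> sG sH [a b] [c d].
by rewrite /cart_rel /= (sG a c) (sH b d) (eq_sym a c) (eq_sym b d).
Qed.

Lemma inN_pair a b c d : ((a,b) \in cnbhd E (c,d)) =
  [|| (a == c) && (b == d), (c == a) && eH d b | eG c a && (d == b)].
Proof. by rewrite in_cnbhd /cart_rel /= xpair_eqE. Qed.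

Lemma N1 a b c d : (a,b) \in cnbhd E (c,d) -> a \in cnbhd eG c.
Proof.
rewrite inN_pair in_cnbhd => /or3P[/andP[/eqP-> _]|/andP[/eqP-> _]|/andP[-> _]];
  by rewrite ?eqxx ?orbT.
Qed.

Lemma N2 a b c d : (a,b) \in cnbhd E (c,d) -> b \in cnbhd eH d.
Proof.
rewrite inN_pair in_cnbhd => /or3P[/andP[_ /eqP->]|/andP[_ ->]|/andP[_ /eqP->]];
  by rewrite ?eqxx ?orbT.
Qed.

Lemma N_row a c v : ((a,v) \in cnbhd E (c,v)) = (a \in cnbhd eG c).
Proof. by rewrite inN_pair in_cnbhd !eqxx !andbT irrH andbF. Qed.

Lemma N_col u b d : ((u,b) \in cnbhd E (u,d)) = (b \in cnbhd eH d).
Proof. by rewrite inN_pair in_cnbhd !eqxx irrG /= orbF. Qed.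

Lemma SLD_lift1 C : SLDP eG C -> #|U| > 0 -> SLDP E (setX C [set: U]).
Proof.
case=> C0 H neU; case/card_gt0P: neU => v0 _.
split.
  case/set0Pn: C0 => c cC; apply/set0Pn; exists (c, v0); by rewrite in_setX /= cC in_setT.
move=> [u v]; rewrite in_setX /= in_setT andbT => uC.
have [[c /andP[cC cu]] Hx] := H u uC.
split.
  by exists (c, v); rewrite in_setX /= cC in_setT N_row cu.
move=> [x1 x2] Hd.
have x1u : x1 = u.
  apply: Hx => c' c'C c'u; apply: (@N1 x1 x2 c' v); apply: Hd.
    by rewrite in_setX /= c'C in_setT.
  by rewrite N_row.
subst x1.
have := Hd (c, v); rewrite in_setX /= cC in_setT N_row cu => /(_ isT isT).
rewrite inN_pair => /or3P[/andP[/eqP ucE _]|/andP[/eqP cuE _]|/andP[_ /eqP ->]] //.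
- by move: cC; rewrite -ucE (negbTE uC).
- by move: cC; rewrite cuE (negbTE uC).
Qed.

Lemma SLD_lift2 C : SLDP eH C -> #|T| > 0 -> SLDP E (setX [set: T] C).
Proof.
case=> C0 H neT; case/card_gt0P: neT => u0 _.
split.
  case/set0Pn: C0 => c cC; apply/set0Pn; exists (u0, c); by rewrite in_setX /= cC in_setT.
move=> [u v]; rewrite in_setX /= in_setT /= => vC.
have [[c /andP[cC cv]] Hx] := H v vC.
split.
  by exists (u, c); rewrite in_setX /= cC in_setT N_col cv.
move=> [x1 x2] Hd.
have x2v : x2 = v.
  apply: Hx => c' c'C c'v; apply: (@N2 x1 x2 u c'); apply: Hd.
    by rewrite in_setX /= c'C in_setT.
  by rewrite N_col.
subst x2.
have := Hd (u, c); rewrite in_setX /= cC in_setT N_col cv => /(_ isT isT).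
rewrite inN_pair => /or3P[/andP[_ /eqP vcE]|/andP[/eqP -> _]|/andP[_ /eqP cvE]] //.
- by move: cC; rewrite -vcE (negbTE vC).
- by move: cC; rewrite cvE (negbTE vC).
Qed.

Lemma DLD_lift1 C : DLDP eG C -> #|U| > 0 -> DLDP E (setX C [set: U]).
Proof.
case=> C0 [H1 H2] neU; case/card_gt0P: neU => v0 _.
have dom : forall u v, u \notin C ->
    exists c, (c \in setX C [set: U]) && (c \in cnbhd E (u, v)).
  move=> u v uC; have [c /andP[cC cu]] := H1 u uC.
  by exists (c, v); rewrite in_setX /= cC in_setT N_row cu.
split.
  case/set0Pn: C0 => c cC; apply/set0Pn; exists (c, v0); by rewrite in_setX /= cC in_setT.
split.
  move=> [u v]; rewrite in_setX /= in_setT andbT; exact: dom.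
move=> [u v] [w v']; rewrite !in_setX /= !in_setT !andbT => uC wC.
case: (eqVneq u w) => [<-|uw] H.
- have vv' : (v == v') = false by apply: negbTE; move: H; rewrite xpair_eqE eqxx.
  have [c /andP[cC cu]] := H1 u uC.
  exists (c, v); rewrite in_setX /= cC in_setT N_row cu /= inN_pair.
  by rewrite (neq_mem cC uC) [u == c]eq_sym (neq_mem cC uC) [v' == v]eq_sym vv' !andbF.
- have [c /and3P[cC cu cw]] := H2 u w uC wC uw.
  exists (c, v); rewrite in_setX /= cC in_setT N_row cu /= inN_pair.
  move: cw; rewrite in_cnbhd negb_or => /andP[/negbTE cw1 /negbTE cw2].
  by rewrite cw1 [w == c]eq_sym cw1 cw2.
Qed.

Lemma DLD_lift2 C : DLDP eH C -> #|T| > 0 -> DLDP E (setX [set: T] C).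
Proof.
case=> C0 [H1 H2] neT; case/card_gt0P: neT => u0 _.
have dom : forall u v, v \notin C ->
    exists c, (c \in setX [set: T] C) && (c \in cnbhd E (u, v)).
  move=> u v vC; have [c /andP[cC cv]] := H1 v vC.
  by exists (u, c); rewrite in_setX /= cC in_setT N_col cv.
split.
  case/set0Pn: C0 => c cC; apply/set0Pn; exists (u0, c); by rewrite in_setX /= cC in_setT.
split.
  move=> [u v]; rewrite in_setX /= in_setT /=; exact: dom.
move=> [u v] [u' w]; rewrite !in_setX /= !in_setT /= => vC wC.
case: (eqVneq v w) => [<-|vw] H.
- have uu' : (u == u') = false by apply: negbTE; move: H; rewrite xpair_eqE eqxx andbT.
  have [c /andP[cC cv]] := H1 v vC.
  exists (u, c); rewrite in_setX /= cC in_setT N_col cv /= inN_pair.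
  by rewrite (neq_mem cC vC) [v == c]eq_sym (neq_mem cC vC) [u' == u]eq_sym uu' !andbF.
- have [c /and3P[cC cv cw]] := H2 v w vC wC vw.
  exists (u, c); rewrite in_setX /= cC in_setT N_col cv /= inN_pair.
  move: cw; rewrite in_cnbhd negb_or => /andP[/negbTE cw1 /negbTE cw2].
  by rewrite cw1 [w == c]eq_sym cw1 cw2 !andbF.
Qed.

Lemma in_proj1 (D : {set T * U}) a b : (a,b) \in D -> a \in [set x.1 | x in D].
Proof. by move=> h; apply/imsetP; exists (a,b). Qed.

Lemma in_proj2 (D : {set T * U}) a b : (a,b) \in D -> b \in [set x.2 | x in D].
Proof. by move=> h; apply/imsetP; exists (a,b). Qed.

Lemma proj_nb1 (D : {set T * U}) a v d1 d2 : a \notin [set x.1 | x in D] ->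
  (d1,d2) \in D -> (d1,d2) \in cnbhd E (a,v) -> d1 \in cnbhd eG a /\ d2 = v.
Proof.
move=> aD dD dN; split; first exact: N1 dN.
move: dN; rewrite inN_pair => /or3P[/andP[_ /eqP->]|/andP[/eqP ad _]|/andP[_ /eqP->]] //.
by move: aD; rewrite ad (in_proj1 dD).
Qed.

Lemma proj_nb2 (D : {set T * U}) u b d1 d2 : b \notin [set x.2 | x in D] ->
  (d1,d2) \in D -> (d1,d2) \in cnbhd E (u,b) -> d2 \in cnbhd eH b /\ d1 = u.
Proof.
move=> bD dD dN; split; first exact: N2 dN.
move: dN; rewrite inN_pair => /or3P[/andP[/eqP-> _]|/andP[/eqP-> _]|/andP[_ /eqP bd]] //.
by move: bD; rewrite bd (in_proj2 dD).
Qed.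

Lemma SLD_proj1 D : SLDP E D -> #|U| > 0 -> SLDP eG [set x.1 | x in D].
Proof.
case=> D0 H neU; case/card_gt0P: neU => v0 _.
split.
  case/set0Pn: D0 => [[a b]] ab; apply/set0Pn; exists a; exact: in_proj1 ab.
move=> u uD.
have uv0 : (u, v0) \notin D by apply: contra uD; exact: in_proj1.
have [[[d1 d2] /andP[dD dN]] Hx] := H (u, v0) uv0.
have [d1u d2v] := proj_nb1 uD dD dN.
split.
  by exists d1; rewrite (in_proj1 dD) d1u.
move=> x Hc.
suff: (x, v0) = (u, v0) by move=> [->].
apply: Hx => [[c1 c2]] cD cN.
have [c1u c2v] := proj_nb1 uD cD cN.
subst c2.
have := Hc c1 (in_proj1 cD) c1u.
by rewrite N_row.
Qed.

Lemma SLD_proj2 D : SLDP E D -> #|T| > 0 -> SLDP eH [set x.2 | x in D].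
Proof.
case=> D0 H neT; case/card_gt0P: neT => u0 _.
split.
  case/set0Pn: D0 => [[a b]] ab; apply/set0Pn; exists b; exact: in_proj2 ab.
move=> v vD.
have uv0 : (u0, v) \notin D by apply: contra vD; exact: in_proj2.
have [[[d1 d2] /andP[dD dN]] Hx] := H (u0, v) uv0.
have [d2v d1u] := proj_nb2 vD dD dN.
split.
  by exists d2; rewrite (in_proj2 dD) d2v.
move=> x Hc.
suff: (u0, x) = (u0, v) by move=> [->].
apply: Hx => [[c1 c2]] cD cN.
have [c2v c1u] := proj_nb2 vD cD cN.
subst c1.
have := Hc c2 (in_proj2 cD) c2v.
by rewrite N_col.
Qed.

Lemma DLD_proj1 D : DLDP E D -> #|U| > 0 -> DLDP eG [set x.1 | x in D].
Proof.
case=> D0 [H1 H2] neU; case/card_gt0P: neU => v0 _.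
split.
  case/set0Pn: D0 => [[a b]] ab; apply/set0Pn; exists a; exact: in_proj1 ab.
split.
  move=> u uD.
  have uv0 : (u, v0) \notin D by apply: contra uD; exact: in_proj1.
  have [[d1 d2] /andP[dD dN]] := H1 _ uv0.
  have [d1u _] := proj_nb1 uD dD dN.
  by exists d1; rewrite (in_proj1 dD) d1u.
move=> u w uD wD uw.
have uv0 : (u, v0) \notin D by apply: contra uD; exact: in_proj1.
have wv0 : (w, v0) \notin D by apply: contra wD; exact: in_proj1.
have uwv : (u, v0) != (w, v0) by rewrite xpair_eqE (negbTE uw).
have [[d1 d2] /and3P[dD dN dW]] := H2 _ _ uv0 wv0 uwv.
have [d1u d2v] := proj_nb1 uD dD dN.
subst d2.
exists d1; rewrite (in_proj1 dD) d1u /=.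
by move: dW; rewrite N_row.
Qed.

Lemma DLD_proj2 D : DLDP E D -> #|T| > 0 -> DLDP eH [set x.2 | x in D].
Proof.
case=> D0 [H1 H2] neT; case/card_gt0P: neT => u0 _.
split.
  case/set0Pn: D0 => [[a b]] ab; apply/set0Pn; exists b; exact: in_proj2 ab.
split.
  move=> v vD.
  have uv0 : (u0, v) \notin D by apply: contra vD; exact: in_proj2.
  have [[d1 d2] /andP[dD dN]] := H1 _ uv0.
  have [d2v _] := proj_nb2 vD dD dN.
  by exists d2; rewrite (in_proj2 dD) d2v.
move=> v w vD wD vw.
have uv0 : (u0, v) \notin D by apply: contra vD; exact: in_proj2.
have wv0 : (u0, w) \notin D by apply: contra wD; exact: in_proj2.
have uwv : (u0, v) != (u0, w) by rewrite xpair_eqE (negbTE vw) andbF.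
have [[d1 d2] /and3P[dD dN dW]] := H2 _ _ uv0 wv0 uwv.
have [d2v d1u] := proj_nb2 vD dD dN.
subst d1.
exists d2; rewrite (in_proj2 dD) d2v /=.
by move: dW; rewrite N_col.
Qed.

End Prod.

Theorem mainTheorem14
  (T : finType) (eG : rel T) (symG : symmetric eG) (irrG : irreflexive eG)
  (U : finType) (eH : rel U) (symH : symmetric eH) (irrH : irreflexive eH)
  (neT : #|T| > 0) (neU : #|U| > 0) :
  (maxn (gammaSLD eG) (gammaSLD eH) <= gammaSLD (cart_rel eG eH)
   /\ gammaSLD (cart_rel eG eH) <= minn (#|U| * gammaSLD eG) (#|T| * gammaSLD eH))
  /\
  (maxn (gammaDLD eG) (gammaDLD eH) <= gammaDLD (cart_rel eG eH)
   /\ gammaDLD (cart_rel eG eH) <= minn (#|U| * gammaDLD eG) (#|T| * gammaDLD eH)).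
Proof.
have sE := symE symG symH.
rewrite /gammaSLD /gammaDLD.
have neTU : #|{: T * U}| > 0 by rewrite card_prod muln_gt0 neT neU.
have [SG SGs SGe] := min_code_ex (SLD_setT eG neT).
have [SH SHs SHe] := min_code_ex (SLD_setT eH neU).
have [SE SEs SEe] := min_code_ex (SLD_setT (cart_rel eG eH) neTU).
have [DG DGs DGe] := min_code_ex (DLD_setT eG neT).
have [DH DHs DHe] := min_code_ex (DLD_setT eH neU).
have [DE DEs DEe] := min_code_ex (DLD_setT (cart_rel eG eH) neTU).
split; split.
- rewrite geq_max SEe; apply/andP; split.
  + apply: leq_trans (leq_imset_card _ _); apply: min_code_le.
    apply/(SLDP_iff _ symG); apply: (SLD_proj1 irrH) => //; exact/(SLDP_iff _ sE).
  + apply: leq_trans (leq_imset_card _ _); apply: min_code_le.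
    apply/(SLDP_iff _ symH); apply: (SLD_proj2 irrG) => //; exact/(SLDP_iff _ sE).
- rewrite leq_min SGe SHe; apply/andP; split.
  + apply: (@leq_trans #|setX SG [set: U]|); last by rewrite cardsX cardsT mulnC.
    apply: min_code_le; apply/(SLDP_iff _ sE); apply: (SLD_lift1 irrH) => //.
    exact/(SLDP_iff _ symG).
  + apply: (@leq_trans #|setX [set: T] SH|); last by rewrite cardsX cardsT.
    apply: min_code_le; apply/(SLDP_iff _ sE); apply: (SLD_lift2 irrG) => //.
    exact/(SLDP_iff _ symH).
- rewrite geq_max DEe; apply/andP; split.
  + apply: leq_trans (leq_imset_card _ _); apply: min_code_le.
    apply/DLDP_iff; apply: (DLD_proj1 irrH) => //; exact/DLDP_iff.
  + apply: leq_trans (leq_imset_card _ _); apply: min_code_le.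
    apply/DLDP_iff; apply: (DLD_proj2 irrG) => //; exact/DLDP_iff.
- rewrite leq_min DGe DHe; apply/andP; split.
  + apply: (@leq_trans #|setX DG [set: U]|); last by rewrite cardsX cardsT mulnC.
    apply: min_code_le; apply/DLDP_iff; apply: (DLD_lift1 irrH) => //.
    exact/DLDP_iff.
  + apply: (@leq_trans #|setX [set: T] DH|); last by rewrite cardsX cardsT.
    apply: min_code_le; apply/DLDP_iff; apply: (DLD_lift2 irrG) => //.
    exact/DLDP_iff.
Qed.
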